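(* Let $X_1,\dots,X_n$ be real numbers (or random variables), $\epsilon\in(0,1/2)$, and let $X_1^\epsilon,\dots,X_n^\epsilon$ satisfy $\#\{i\in[n]:X_i^\epsilon\neq X_i\}\leq\epsilon n$. Let $k_1,k_2\in\mathbb{N}$ satisfy $\min\{k_1,k_2\}\geq\lfloor\epsilon n\rfloor$ and $k_1+k_2<n$. Then \[\overline{X}_{n,k_1-\lfloor\epsilon n\rfloor,\,k_2+\lfloor\epsilon n\rfloor}\leq\overline{X^\epsilon}_{n,k_1,k_2}\leq\overline{X}_{n,k_1+\lfloor\epsilon n\rfloor,\,k_2-\lfloor\epsilon n\rfloor}.\]
   Context: For integers $k_1,k_2\geq0$ with $k_1+k_2<n$ and order statistics $X_{(1)}\le\dots\le X_{(n)}$, the $(k_1,k_2)$-trimmed mean is $\overline{X}_{n,k_1,k_2}:=\frac{1}{n-k_1-k_2}\sum_{i=k_1+1}^{n-k_2}X_{(i)}$; $\overline{X^\epsilon}_{n,k_1,k_2}$ is defined in the same way from the order statistics $X^\epsilon_{(1)}\le\dots\le X^\epsilon_{(n)}$ of $X^\epsilon_1,\dots,X^\epsilon_n$. *)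

(* Defs.v *)
From mathcomp Require Import all_boot all_order all_algebra.
Set Implicit Arguments. Unset Strict Implicit. Unset Printing Implicit Defensive.
Import Order.TTheory GRing.Theory Num.Theory.
Local Open Scope ring_scope.

(* Order statistics X_(1) <= ... <= X_(n), stored 0-based:
   X_(i) = nth 0 (order_stats X) (i-1). *)
Definition order_stats (R : realFieldType) (n : nat) (X : 'I_n -> R) : seq R :=
  sort <=%R [seq X i | i <- enum 'I_n].

Definition trimmed_mean (R : realFieldType) (n k1 k2 : nat) (X : 'I_n -> R) : R :=
  ((n - k1 - k2)%N%:R)^-1 *
    \sum_(k1 <= i < n - k2) nth 0 (order_stats X) i.

(* Main.v *)
Require Import Defs.
From mathcomp Require Import all_boot all_order all_algebra.
From mathcomp Require Import zify.
Import Order.TTheory GRing.Theory Num.Theory.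
Local Open Scope ring_scope.

Lemma cnt (T : finType) (P : pred T) : count P (enum T) = #|P|.
Proof. by rewrite cardE size_filter (enumT T). Qed.

Section S.
Variable R : realFieldType.

Lemma count_lt_nth (s : seq R) i : sorted <=%R s -> (i < size s)%N ->
  (count (fun x : R => (x < nth 0 s i)%R) s <= i)%N.
Proof.
move=> ss hi; set t := nth 0 s i.
rewrite -(cat_take_drop i s) count_cat.
rewrite (_ : count _ (drop i s) = 0%N); last first.
  apply/eqP; rewrite -leqn0 leqNgt -has_count; apply/hasPn => y /(nthP 0) [j hj <-].
  rewrite nth_drop -leNgt; apply: le_sorted_leq_nth => //.
    by rewrite inE -ltn_subRL -size_drop.
  by rewrite leq_addr.
rewrite addn0; apply: leq_trans (count_size _ _) _; by rewrite size_take hi.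
Qed.

Lemma nth_ge (s : seq R) j v : sorted <=%R s -> (j < size s)%N ->
  (count (fun x : R => (x < v)%R) s <= j)%N -> v <= nth 0 s j.
Proof.
move=> ss hj hc; rewrite leNgt; apply/negP => hlt.
have hsz : size (take j.+1 s) = j.+1 by rewrite size_takel.
have h : count (fun x : R => (x < v)%R) (take j.+1 s) = j.+1.
  rewrite -[in RHS]hsz; apply/eqP; rewrite -all_count; apply/allP => y /(nthP 0) [k hk <-].
  rewrite hsz in hk; rewrite nth_take //.
  apply: le_lt_trans hlt; apply: le_sorted_leq_nth => //; rewrite inE; exact: leq_trans hk hj.
have := count_cat (fun x : R => (x < v)%R) (take j.+1 s) (drop j.+1 s).
rewrite cat_take_drop h => e. rewrite e in hc. lia.
Qed.
End S.

Lemma key (R : realFieldType) n (X Xe : 'I_n -> R) m i :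
  (#|[set k | Xe k != X k]| <= m)%N -> (i + m < n)%N ->
  nth 0 (order_stats Xe) i <= nth 0 (order_stats X) (i + m).
Proof.
move=> hD him.
have sz (Y : 'I_n -> R) : size (order_stats Y) = n by rewrite size_sort size_map size_enum_ord.
have so (Y : 'I_n -> R) : sorted <=%R (order_stats Y) := sort_sorted le_total _.
have ct (Y : 'I_n -> R) (p : pred R) : count p (order_stats Y) = #|[set k | p (Y k)]|.
  rewrite /order_stats; have /permPl/permP -> := perm_sort <=%R [seq Y i | i <- enum 'I_n].
  by rewrite count_map cnt cardsE.
set v := nth 0 (order_stats Xe) i.
have h1 : (count (fun x : R => (x < v)%R) (order_stats Xe) <= i)%N.
  by apply: count_lt_nth => //; rewrite sz; lia.
apply: nth_ge => //; first by rewrite sz.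
rewrite ct; rewrite ct in h1.
have hs : [set k | X k < v] \subset [set k | Xe k < v] :|: [set k | Xe k != X k].
  apply/subsetP => k; rewrite !inE; case: (eqVneq (Xe k) (X k)) => [-> -> //| _ _]; by rewrite orbT.
apply: leq_trans (subset_leq_card hs) _.
apply: leq_trans (leq_card_setU _ _) _.
lia.
Qed.

Theorem proposition3p6 (R : archiRealFieldType) (n : nat) (X Xe : 'I_n -> R)
  (eps : R) (k1 k2 : nat) :
  0 < eps -> eps < 2^-1 ->
  (#|[set i | Xe i != X i]|%:R <= eps * n%:R) ->
  (Num.floor (eps * n%:R) <= (minn k1 k2)%:Z)%R ->
  (k1 + k2 < n)%N ->
  let m := `|Num.floor (eps * n%:R)|%N in
  trimmed_mean (k1 - m) (k2 + m) X <= trimmed_mean k1 k2 Xe /\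
  trimmed_mean k1 k2 Xe <= trimmed_mean (k1 + m) (k2 - m) X.
Proof.
move=> he0 _ hc hfl hk m.
have f0 : 0 <= Num.floor (eps * n%:R) by rewrite floor_ge0 mulr_ge0 // ltW.
have mz : m%:Z = Num.floor (eps * n%:R) by rewrite /m gez0_abs.
have hmin : (m <= minn k1 k2)%N by rewrite -lez_nat mz.
have hm1 : (m <= k1)%N by move: hmin; rewrite leq_min => /andP[].
have hm2 : (m <= k2)%N by move: hmin; rewrite leq_min => /andP[].
have hD : (#|[set i | Xe i != X i]| <= m)%N.
  by rewrite -lez_nat mz floor_ge_int.
have hD' : (#|[set i | X i != Xe i]| <= m)%N.
  by rewrite (_ : [set i | X i != Xe i] = [set i | Xe i != X i]) //; apply/setP => k; rewrite !inE eq_sym.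
rewrite /trimmed_mean; split.
- have -> : (n - (k1 - m) - (k2 + m) = n - k1 - k2)%N by lia.
  apply: ler_wpM2l; first by rewrite invr_ge0 ler0n.
  have -> : \sum_(k1 <= i < n - k2) nth 0 (order_stats Xe) i =
            \sum_(k1 - m <= i < n - (k2 + m)) nth 0 (order_stats Xe) (i + m).
    rewrite -{1}(subnK hm1) big_addn; congr (\sum_(_ <= i < _) _); lia.
  apply: ler_sum_nat => i /andP[_ hi]; apply: key => //; lia.
- have -> : (n - (k1 + m) - (k2 - m) = n - k1 - k2)%N by lia.
  apply: ler_wpM2l; first by rewrite invr_ge0 ler0n.
  have -> : \sum_(k1 + m <= i < n - (k2 - m)) nth 0 (order_stats X) i =
            \sum_(k1 <= i < n - k2) nth 0 (order_stats X) (i + m).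
    rewrite big_addn; congr (\sum_(_ <= i < _) _); lia.
  apply: ler_sum_nat => i /andP[_ hi]; apply: key => //; lia.
Qed.
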